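(* Let $q\ge2$ be an integer and define $F(y)=\ln\!\Big(\frac{(1-y)^q+(1+y)^q}{2}\Big)$ for $y\in[0,1]$, and $G(z)=\ln F(e^z)$ for $z\in(-\infty,0]$. Then $G$ is concave on $(-\infty,0]$. Consequently, for all $0\le\epsilon\le\tfrac12$ and all $0<x\le1$, \[ F\big((1-2\epsilon)x\big)\cdot F(1) ~\le~ F(1-2\epsilon)\cdot F(x). \]
   Context: Note $F(y)>0$ for $0<y\le1$, so $G$ is well defined on $(-\infty,0]$. *)

(* Defs.v *)
From Stdlib Require Import Reals Lra Lia.
Open Scope R_scope.

Definition F (q : nat) (y : R) : R := ln (((1 - y) ^ q + (1 + y) ^ q) / 2).

Definition G (q : nat) (z : R) : R := ln (F q (exp z)).

Definition concave_on (D : R -> Prop) (f : R -> R) : Prop :=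
  forall a b t, D a -> D b -> 0 <= t <= 1 ->
    t * f a + (1 - t) * f b <= f (t * a + (1 - t) * b).

(* Main.v *)
Require Import Defs.
From Stdlib Require Import Reals Lra Lia.
From Coquelicot Require Import Coquelicot.
Open Scope R_scope.

Ltac fixm := repeat match goal with |- context [?a + - ?b] => replace (a + - b) with (a - b) by ring end.

Lemma powS (x : R) (n : nat) : x ^ (S n) = x * x ^ n.
Proof. reflexivity. Qed.

Definition Pm (m : nat) (y : R) := ((1-y)^(S (S m)) + (1+y)^(S (S m)))/2.
Definition dPm (m : nat) (y : R) :=
  INR (S (S m)) * ((1+y)*(1+y)^m - (1-y)*(1-y)^m)/2.
Definition d2Pm (m : nat) (y : R) :=
  INR (S (S m)) * INR (S m) * ((1+y)^m + (1-y)^m)/2.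

Lemma pow_bounds (y : R) (k : nat) : 0 <= y <= 1 ->
  0 <= (1-y)^k <= 1 /\ 1 <= (1+y)^k.
Proof.
  intros Hy. split; [split|].
  - apply pow_le; lra.
  - replace 1 with (1^k) at 2 by apply pow1. apply pow_incr; lra.
  - replace 1 with (1^k) at 1 by apply pow1. apply pow_incr; lra.
Qed.

Lemma Pm_ge (m : nat) (y : R) : 0 <= y <= 1 -> 1 + y^2 <= Pm m y.
Proof.
  intros Hy. unfold Pm.
  assert (H: forall k, 2 + 2*y^2 <= (1-y)^(S (S k)) + (1+y)^(S (S k))).
  { induction k.
    - simpl. nra.
    - rewrite (powS (1-y) (S (S k))), (powS (1+y) (S (S k))).
      destruct (pow_bounds y (S (S k)) Hy) as [[H1 H2] H3].
      assert ((1-y)^(S (S k)) <= (1+y)^(S (S k))) by (apply pow_incr; lra).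
      nra. }
  specialize (H m). lra.
Qed.

Lemma Pm_pos (m : nat) (y : R) : 0 <= y <= 1 -> 0 < Pm m y.
Proof. intros Hy. pose proof (Pm_ge m y Hy). pose proof (pow2_ge_0 y). lra. Qed.

Lemma Pm_gt1 (m : nat) (y : R) : 0 < y <= 1 -> 1 < Pm m y.
Proof. intros Hy. pose proof (Pm_ge m y ltac:(lra)).
  assert (0 < y^2) by (apply pow_lt; lra). lra. Qed.

Lemma Pm_0 (m : nat) : Pm m 0 = 1.
Proof. unfold Pm. rewrite Rminus_0_r, Rplus_0_r, !pow1. field. Qed.

Lemma INR_pos (n : nat) : 0 < INR (S n).
Proof. apply lt_0_INR. lia. Qed.

Lemma dPm_pos (m : nat) (y : R) : 0 < y <= 1 -> 0 < dPm m y.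
Proof.
  intros Hy. unfold dPm.
  destruct (pow_bounds y m ltac:(lra)) as [[H1 H2] H3].
  pose proof (INR_pos (S m)).
  assert (0 < (1+y)*(1+y)^m - (1-y)*(1-y)^m) by nra.
  apply Rmult_lt_0_compat; [|lra]. nra.
Qed.

Lemma Pm_deriv (m : nat) (y : R) : is_derive (Pm m) y (dPm m y).
Proof.
  unfold Pm, dPm. auto_derive; [trivial|].
  change (match m with 0%nat => 1 | S _ => INR m + 1 end) with (INR (S m)).
  rewrite (S_INR (S m)). replace (1 + - y) with (1 - y) by ring. field.
Qed.

Lemma dPm_deriv (m : nat) (y : R) : is_derive (dPm m) y (d2Pm m y).
Proof.
  unfold dPm, d2Pm. auto_derive; [trivial|].
  destruct m as [|m'].
  - simpl. field.
  - simpl pred. fixm. rewrite !powS, !S_INR. field.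
Qed.


Lemma mvt (g dg : R -> R) (a b : R) : a < b ->
  (forall x, a <= x <= b -> is_derive g x (dg x)) ->
  exists c, g b - g a = dg c * (b - a) /\ a < c < b.
Proof.
  intros Hab Hd. apply MVT_cor2; auto.
  intros c Hc. apply is_derive_Reals. auto.
Qed.

Lemma concave_main (g dg : R -> R) :
  (forall z, z <= 0 -> is_derive g z (dg z)) ->
  (forall a b, a <= b <= 0 -> dg b <= dg a) ->
  forall a b t, a < b <= 0 -> 0 <= t <= 1 ->
    t * g a + (1 - t) * g b <= g (t * a + (1 - t) * b).
Proof.
  intros Hd Hm a b t Hab Ht.
  destruct (Req_dec t 0) as [->|Ht0].
  { replace (0 * a + (1 - 0) * b) with b by ring. lra. }
  destruct (Req_dec t 1) as [->|Ht1].
  { replace (1 * a + (1 - 1) * b) with a by ring. lra. }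
  set (c := t * a + (1 - t) * b).
  assert (Hc : a < c < b) by (unfold c; split; nra).
  destruct (mvt g dg a c) as [x1 [E1 H1]]; [lra| intros x Hx; apply Hd; lra |].
  destruct (mvt g dg c b) as [x2 [E2 H2]]; [lra| intros x Hx; apply Hd; lra |].
  assert (Hmono : dg x2 <= dg x1) by (apply Hm; lra).
  assert (Ec : c - a = (1 - t) * (b - a)) by (unfold c; ring).
  assert (Ec2 : b - c = t * (b - a)) by (unfold c; ring).
  rewrite Ec in E1. rewrite Ec2 in E2.
  assert (0 <= t * (1 - t) * (b - a)) by (apply Rmult_le_pos; nra).
  assert (0 <= t * (1 - t) * (b - a) * (dg x1 - dg x2)) by (apply Rmult_le_pos; lra).
  nra.
Qed.

Lemma concave_from_deriv (g dg : R -> R) :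
  (forall z, z <= 0 -> is_derive g z (dg z)) ->
  (forall a b, a <= b <= 0 -> dg b <= dg a) ->
  concave_on (fun z => z <= 0) g.
Proof.
  intros Hd Hm a b t Ha Hb Ht.
  destruct (Rtotal_order a b) as [Hab|[Hab|Hab]].
  - apply (concave_main g dg Hd Hm); lra.
  - subst. replace (t * b + (1 - t) * b) with b by ring. lra.
  - pose proof (concave_main g dg Hd Hm b a (1 - t) ltac:(lra) ltac:(lra)) as H.
    replace ((1 - t) * b + (1 - (1 - t)) * a) with (t * a + (1 - t) * b) in H by ring.
    lra.
Qed.

Definition Hf (m : nat) (y : R) := y * dPm m y / (Pm m y * ln (Pm m y)).

Lemma exp_le1 (z : R) : z <= 0 -> 0 < exp z <= 1.
Proof.
  intros Hz. split. apply exp_pos. rewrite <- exp_0.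
  destruct (Req_dec z 0) as [->|H]; [lra|]. left. apply exp_increasing. lra.
Qed.

Lemma lnP_pos (m : nat) (y : R) : 0 < y <= 1 -> 0 < ln (Pm m y).
Proof. intros Hy. rewrite <- ln_1. apply ln_increasing. lra. apply Pm_gt1; auto. Qed.

Lemma G_deriv (m : nat) (z : R) : z <= 0 ->
  is_derive (G (S (S m))) z (Hf m (exp z)).
Proof.
  intros Hz.
  pose proof (exp_le1 z Hz) as Hy.
  pose proof (Pm_gt1 m (exp z) Hy) as HP.
  pose proof (lnP_pos m (exp z) Hy) as HL.
  change (G (S (S m))) with (fun z => ln (ln (Pm m (exp z)))).
  auto_derive.
  - repeat split; try lra. exists (dPm m (exp z)). apply Pm_deriv.
    replace (Derive (fun x : R => Pm m x) (exp z)) with (dPm m (exp z)) by (symmetry; apply is_derive_unique; apply Pm_deriv).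
    unfold Hf. field. lra.
Qed.

Definition Nf (m : nat) (y : R) := y * dPm m y / Pm m y.
Definition Phi (m : nat) (y : R) := ln (Pm m y).
Definition dNf (m : nat) (y : R) :=
  (dPm m y + y * d2Pm m y) / Pm m y - y * dPm m y * dPm m y / (Pm m y * Pm m y).
Definition Lf (m : nat) (y : R) :=
  1 + y * d2Pm m y / dPm m y - y * dPm m y / Pm m y.

Lemma ex_Pm m y : ex_derive (Pm m) y.
Proof. exists (dPm m y). apply Pm_deriv. Qed.
Lemma ex_dPm m y : ex_derive (dPm m) y.
Proof. exists (d2Pm m y). apply dPm_deriv. Qed.

Ltac repD m y :=
  try replace (Derive (fun x : R => Pm m x) y) with (dPm m y)
    by (symmetry; apply is_derive_unique; apply Pm_deriv);
  try replace (Derive (fun x : R => dPm m x) y) with (d2Pm m y)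
    by (symmetry; apply is_derive_unique; apply dPm_deriv).

Ltac sides := repeat match goal with
  | |- _ /\ _ => split
  | |- True => exact I
  | |- ex_derive (fun x => Pm _ x) _ => apply ex_Pm
  | |- ex_derive (fun x => dPm _ x) _ => apply ex_dPm
  | |- ex_derive (Pm _) _ => apply ex_Pm
  | |- _ * _ <> 0 => apply Rmult_integral_contrapositive_currified
  | |- _ <> 0 => lra
  | |- 0 < _ => lra
  end.

Lemma Nf_deriv m y : 0 <= y <= 1 -> is_derive (Nf m) y (dNf m y).
Proof.
  intros Hy. pose proof (Pm_pos m y Hy).
  unfold Nf. auto_derive.
  - sides.
  - repD m y. unfold dNf. field. lra.
Qed.

Lemma Phi_deriv m y : 0 <= y <= 1 -> is_derive (Phi m) y (dPm m y / Pm m y).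
Proof.
  intros Hy. pose proof (Pm_pos m y Hy).
  unfold Phi. auto_derive.
  - sides.
  - repD m y. field. lra.
Qed.

Lemma dNf_L m y : 0 < y <= 1 -> dNf m y = Lf m y * (dPm m y / Pm m y).
Proof.
  intros Hy. pose proof (Pm_pos m y ltac:(lra)). pose proof (dPm_pos m y Hy).
  unfold dNf, Lf. field. lra.
Qed.

Lemma Hf_deriv m y : 0 < y <= 1 ->
  is_derive (Hf m) y
    ((dNf m y * Phi m y - Nf m y * (dPm m y / Pm m y)) / (Phi m y * Phi m y)).
Proof.
  intros Hy. pose proof (Pm_gt1 m y Hy). pose proof (lnP_pos m y Hy).
  unfold Hf. auto_derive.
  - sides.
  - repD m y. unfold dNf, Nf, Phi. field. lra.
Qed.

Section WithL.
Variable m : nat.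
Hypothesis Lmono : forall y1 y2, 0 < y1 /\ y1 <= y2 /\ y2 <= 1 -> Lf m y2 <= Lf m y1.

Lemma Kstep y0 : 0 < y0 <= 1 -> Lf m y0 * Phi m y0 <= Nf m y0.
Proof.
  intros Hy0. set (c := Lf m y0).
  destruct (mvt (fun y => Nf m y - c * Phi m y)
                (fun y => dNf m y - c * (dPm m y / Pm m y)) 0 y0)
    as [x [E Hx]]; [lra| |].
  - intros x Hx. apply (is_derive_minus (fun y => Nf m y) (fun y => c * Phi m y)).
    + apply Nf_deriv; lra.
    + apply is_derive_scal. apply Phi_deriv; lra.
  - assert (HN0 : Nf m 0 = 0) by (unfold Nf; rewrite Pm_0; field).
    assert (HP0 : Phi m 0 = 0) by (unfold Phi; rewrite Pm_0; apply ln_1).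
    rewrite HN0, HP0 in E.
    rewrite dNf_L in E by lra.
    assert (c <= Lf m x) by (apply Lmono; lra).
    assert (0 < dPm m x / Pm m x).
    { apply Rdiv_lt_0_compat. apply dPm_pos; lra. apply Pm_pos; lra. }
    assert (0 <= (Lf m x * (dPm m x / Pm m x) - c * (dPm m x / Pm m x)) * (y0 - 0)) by
      (apply Rmult_le_pos; nra).
    rewrite Rmult_0_r in E. lra.
Qed.

Lemma Hf_mono y1 y2 : 0 < y1 /\ y1 <= y2 /\ y2 <= 1 -> Hf m y2 <= Hf m y1.
Proof.
  intros Hy. destruct (Req_dec y1 y2) as [->|Hne]; [lra|].
  destruct (mvt (Hf m) (fun x => (dNf m x * Phi m x - Nf m x * (dPm m x / Pm m x)) / (Phi m x * Phi m x)) y1 y2) as [x [E Hx]]; [lra| |].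
  - intros x Hx. apply Hf_deriv; lra.
  - rewrite dNf_L in E by lra.
    pose proof (Kstep x ltac:(lra)) as HK.
    assert (Hd : 0 < dPm m x / Pm m x).
    { apply Rdiv_lt_0_compat. apply dPm_pos; lra. apply Pm_pos; lra. }
    pose proof (lnP_pos m x ltac:(lra)) as HL. fold (Phi m x) in HL.
    set (d := dPm m x / Pm m x) in *.
    set (ph := Phi m x) in *.
    assert (Hi : 0 < / (ph * ph)) by (apply Rinv_0_lt_compat; apply Rmult_lt_0_compat; lra).
    assert (Hn : (Lf m x * d * ph - Nf m x * d) / (ph * ph) <= 0).
    { unfold Rdiv. replace (Lf m x * d * ph - Nf m x * d) with (d * (Lf m x * ph - Nf m x)) by ring.
      assert (HX : Lf m x * ph - Nf m x <= 0) by lra.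
      assert (H0 : d * (Lf m x * ph - Nf m x) <= 0) by nra.
      set (w := d * (Lf m x * ph - Nf m x)) in *.
      set (v := / (ph * ph)) in *. nra. }
    set (k := (Lf m x * d * ph - Nf m x * d) / (ph * ph)) in *.
    assert (k * (y2 - y1) <= 0) by nra. lra.
Qed.
End WithL.

Definition ct (m : nat) (t : R) := t * (1 + t^m) / (1 + t*t*t^m).
Definition Tt (m : nat) (t : R) :=
  (1-t)*(1+t)*(1+t)*t^m / (2*(1+t*t*t^m)*(1 - t*t^m)).
Definition Lt (m : nat) (t : R) := (1 + ct m t)/2 + INR (S m) * Tt m t.

Lemma L_ident m y : 0 < y <= 1 -> Lf m y = Lt m ((1-y)/(1+y)).
Proof.
  intros Hy. set (t := (1-y)/(1+y)).
  assert (Hb : 1 - y = t*(1+y)) by (unfold t; field; lra).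
  assert (Ht0 : 0 <= t) by (unfold t; apply Rdiv_le_0_compat; lra).
  assert (Ht : 0 <= t < 1) by nra.
  unfold Lf, dPm, d2Pm, Pm, Lt, ct, Tt.
  rewrite !powS. rewrite Hb. rewrite Rpow_mult_distr.
  assert (Hu : 0 <= t^m <= 1).
  { split. apply pow_le; lra. rewrite <- (pow1 m). apply pow_incr; lra. }
  assert (HA : 1 <= (1+y)^m).
  { replace 1 with (1^m) at 1 by apply pow1. apply pow_incr; lra. }
  set (u := t^m) in *. set (A := (1+y)^m) in *.
  rewrite !S_INR.
  assert (t * u < 1) by nra.
  pose proof (pos_INR m).
  assert (0 <= (1-y)*u <= 1 - y) by (split; nra).
  assert (0 < u * A + A) by nra.
  unfold t. field. repeat split; nra.
Qed.

Lemma pw_pred m t : t <> 0 -> INR m * t^(pred m) = INR m * t^m / t.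
Proof. intros Ht. destruct m. simpl. field. auto. simpl pred. rewrite powS. field. auto. Qed.

Lemma u_bounds m t : 0 <= t < 1 -> 0 <= t^m <= 1.
Proof. intros Ht. split. apply pow_le; lra. rewrite <- (pow1 m). apply pow_incr; lra. Qed.

Lemma ct_ex m t : 0 <= t < 1 -> ex_derive (ct m) t.
Proof.
  intros Ht. pose proof (u_bounds m t Ht).
  unfold ct. auto_derive. assert (0 <= t * t * t^m) by (apply Rmult_le_pos; nra). lra.
Qed.

Lemma Tt_ex m t : 0 <= t < 1 -> ex_derive (Tt m) t.
Proof.
  intros Ht. pose proof (u_bounds m t Ht).
  unfold Tt. auto_derive. assert (0 <= t * t * t^m) by (apply Rmult_le_pos; nra).
  assert (t * t^m < 1) by nra.
  apply Rmult_integral_contrapositive_currified; [|lra].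
  apply Rmult_integral_contrapositive_currified; lra.
Qed.

Lemma ct_deriv m t : 0 < t < 1 -> is_derive (ct m) t
  ((1 - t*t*t^m*t^m + INR (S m) * t^m * (1 - t*t)) / ((1 + t*t*t^m)*(1 + t*t*t^m))).
Proof.
  intros Ht. pose proof (u_bounds m t ltac:(lra)).
  assert (0 <= t * t * t^m) by (apply Rmult_le_pos; nra).
  unfold ct. auto_derive. lra.
  rewrite pw_pred by lra. rewrite S_INR. field. split; lra.
Qed.

Definition firstT m t := INR (S m) * (1 + t*t^m)/(1 - t*t^m) - (1+t)/(1-t).
Definition secondT m t := INR (S (S m)) * (1 - t*t*t^m)/(1 + t*t*t^m) - 2*(1-t)/(1+t).

Lemma Tt_deriv m t : 0 < t < 1 -> is_derive (Tt m) t
  (Tt m t / (2*t) * (firstT m t + secondT m t)).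
Proof.
  intros Ht. pose proof (u_bounds m t ltac:(lra)).
  assert (0 <= t * t * t^m) by (apply Rmult_le_pos; nra).
  assert (t * t^m < 1) by nra.
  unfold Tt. auto_derive.
  { apply Rmult_integral_contrapositive_currified; [|lra].
    apply Rmult_integral_contrapositive_currified; lra. }
  rewrite pw_pred by lra. unfold firstT, secondT. rewrite !S_INR.
  field. repeat split; lra.
Qed.

Lemma tanh_ineq k t : 0 <= t <= 1 -> (1+t)*(1 - t^k) <= INR k * (1 + t^k)*(1-t).
Proof.
  intros Ht. induction k.
  - simpl. lra.
  - rewrite powS, S_INR.
    assert (Hv : 0 <= t^k <= 1) by (split; [apply pow_le; lra| rewrite <- (pow1 k); apply pow_incr; lra]).
    set (v := t^k) in *.
    assert (Hid : (1-v)*(1+t*v)*(1+t) + (1-t)*(1+t*v)*(1+v) - (1-t*v)*(1+v)*(1+t)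
                  = (1-t)*(1-v)*(1-t*v)) by ring.
    assert (0 <= (1-t)*(1-v)*(1-t*v)) by (apply Rmult_le_pos; [apply Rmult_le_pos|]; nra).
    assert (0 <= 1 + t*v) by nra.
    assert (E : (1-t*v)*(1+v)*(1+t) <= (1+t*v)*(1+v)*(1-t)*(INR k + 1)).
    { assert ((1+t*v) * ((1+t)*(1-v)) <= (1+t*v) * (INR k * (1+v)*(1-t))) by
        (apply Rmult_le_compat_l; lra).
      nra. }
    apply Rmult_le_reg_r with (1+v). lra. nra.
Qed.

Lemma firstT_pos m t : 0 < t < 1 -> 0 <= firstT m t.
Proof.
  intros Ht. pose proof (tanh_ineq (S m) t ltac:(lra)) as H. rewrite powS in H.
  pose proof (u_bounds m t ltac:(lra)).
  assert (t * t^m < 1) by nra.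
  unfold firstT.
  assert (INR (S m) * (1 + t * t ^ m) / (1 - t * t ^ m) - (1 + t) / (1 - t) =
    (INR (S m) * (1 + t * t ^ m) * (1-t) - (1+t)*(1 - t*t^m)) / ((1 - t*t^m)*(1-t))) as ->
    by (field; lra).
  apply Rdiv_le_0_compat; [lra|]. apply Rmult_lt_0_compat; lra.
Qed.

Lemma secondT_pos m t : 0 < t < 1 -> 0 <= secondT m t.
Proof.
  intros Ht. pose proof (u_bounds m t ltac:(lra)).
  assert (0 <= t * t * t^m <= t) by (split; [apply Rmult_le_pos|]; nra).
  pose proof (pos_INR m).
  unfold secondT. rewrite !S_INR.
  assert ((INR m + 1 + 1) * (1 - t * t * t ^ m) / (1 + t * t * t ^ m) - 2 * (1 - t) / (1 + t) =
    ((INR m + 1 + 1) * (1 - t * t * t ^ m) * (1+t) - 2*(1-t)*(1 + t*t*t^m)) / ((1 + t*t*t^m)*(1+t))) as ->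
    by (field; lra).
  apply Rdiv_le_0_compat; [|apply Rmult_lt_0_compat; lra].
  set (w := t*t*t^m) in *.
  assert (0 <= (1-w)*(1+t) - (1-t)*(1+w)) by nra.
  assert (0 <= (1-t)*(1+w)) by nra.
  assert (0 <= INR m * ((1-w)*(1+t))) by (apply Rmult_le_pos; nra).
  nra.
Qed.

Lemma Tt_nonneg m t : 0 < t < 1 -> 0 <= Tt m t.
Proof.
  intros Ht. pose proof (u_bounds m t ltac:(lra)).
  assert (0 <= t * t * t^m) by (apply Rmult_le_pos; nra).
  assert (t * t^m < 1) by nra.
  unfold Tt. apply Rdiv_le_0_compat.
  - repeat apply Rmult_le_pos; lra.
  - repeat apply Rmult_lt_0_compat; lra.
Qed.

Lemma ct_dpos m t : 0 < t < 1 ->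
  0 <= (1 - t*t*t^m*t^m + INR (S m) * t^m * (1 - t*t)) / ((1 + t*t*t^m)*(1 + t*t*t^m)).
Proof.
  intros Ht. pose proof (u_bounds m t ltac:(lra)).
  assert (0 <= t * t * t^m) by (apply Rmult_le_pos; nra).
  pose proof (pos_INR (S m)).
  apply Rdiv_le_0_compat; [|nra].
  assert (0 <= t*t*t^m*t^m <= 1) by (split; nra).
  assert (0 <= INR (S m) * t^m * (1 - t*t)) by (apply Rmult_le_pos; [apply Rmult_le_pos|]; nra).
  lra.
Qed.



Lemma mono_up (f : R -> R) a b : a <= b ->
  (forall x, a <= x <= b -> ex_derive f x) ->
  (forall x, a < x < b -> 0 <= Derive f x) -> f a <= f b.
Proof.
  intros Hab Hex Hpos. destruct (Req_dec a b) as [->|Hne]; [lra|].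
  destruct (mvt f (Derive f) a b) as [c [E Hc]]; [lra| |].
  - intros x Hx. apply Derive_correct. auto.
  - assert (0 <= Derive f c * (b - a)) by (apply Rmult_le_pos; [apply Hpos; lra| lra]). lra.
Qed.

Lemma Lt_ex m t : 0 <= t < 1 -> ex_derive (Lt m) t.
Proof.
  intros Ht. unfold Lt. auto_derive. split; [apply ct_ex; auto|split; [apply Tt_ex; auto| exact I]].
Qed.

Lemma Lt_mono m t1 t2 : 0 <= t1 -> t1 <= t2 -> t2 < 1 -> Lt m t1 <= Lt m t2.
Proof.
  intros H1 H2 H3. apply mono_up; auto.
  - intros x Hx. apply Lt_ex. lra.
  - intros x Hx.
    assert (Hd : is_derive (Lt m) x
      ((1/2) * ((1 - x*x*x^m*x^m + INR (S m) * x^m * (1 - x*x)) / ((1 + x*x*x^m)*(1 + x*x*x^m)))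
       + INR (S m) * (Tt m x / (2*x) * (firstT m x + secondT m x)))).
    { unfold Lt.
      apply (is_derive_plus (fun t => (1 + ct m t)/2) (fun t => INR (S m) * Tt m t)).
      - auto_derive; [apply ct_ex; lra|].
        replace (Derive (fun t => ct m t) x) with
          ((1 - x*x*x^m*x^m + INR (S m) * x^m * (1 - x*x)) / ((1 + x*x*x^m)*(1 + x*x*x^m)))
          by (symmetry; apply is_derive_unique; apply ct_deriv; lra).
        field. pose proof (u_bounds m x ltac:(lra)).
        assert (0 <= x * x * x^m) by (apply Rmult_le_pos; nra). lra.
      - apply is_derive_scal. apply Tt_deriv. lra. }
    rewrite (is_derive_unique _ _ _ Hd).
    pose proof (ct_dpos m x ltac:(lra)).
    pose proof (firstT_pos m x ltac:(lra)).
    pose proof (secondT_pos m x ltac:(lra)).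
    pose proof (Tt_nonneg m x ltac:(lra)).
    pose proof (pos_INR (S m)).
    assert (0 <= Tt m x / (2*x)) by (apply Rdiv_le_0_compat; lra).
    assert (0 <= Tt m x / (2*x) * (firstT m x + secondT m x)) by (apply Rmult_le_pos; lra).
    assert (0 <= INR (S m) * (Tt m x / (2*x) * (firstT m x + secondT m x))) by (apply Rmult_le_pos; lra).
    lra.
Qed.

Lemma t_dec y1 y2 : 0 < y1 -> y1 <= y2 -> (1-y2)/(1+y2) <= (1-y1)/(1+y1).
Proof.
  intros H1 H2.
  replace ((1-y2)/(1+y2)) with (2 * / (1+y2) - 1) by (field; lra).
  replace ((1-y1)/(1+y1)) with (2 * / (1+y1) - 1) by (field; lra).
  assert (/ (1+y2) <= / (1+y1)) by (apply Rinv_le_contravar; lra). lra.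
Qed.

Lemma t_range y : 0 < y <= 1 -> 0 <= (1-y)/(1+y) < 1.
Proof.
  intros Hy. split. apply Rdiv_le_0_compat; lra.
  replace ((1-y)/(1+y)) with (2 * / (1+y) - 1) by (field; lra).
  assert (/ (1+y) < 1).
  { rewrite <- Rinv_1. apply Rinv_lt_contravar; lra. }
  lra.
Qed.

Lemma Lmono_all m : forall y1 y2, 0 < y1 /\ y1 <= y2 <= 1 -> Lf m y2 <= Lf m y1.
Proof.
  intros y1 y2 [H1 [H2 H3]].
  rewrite (L_ident m y1) by lra. rewrite (L_ident m y2) by lra.
  apply Lt_mono.
  - apply t_range; lra.
  - apply t_dec; lra.
  - apply t_range; lra.
Qed.

Lemma conc_sum (g : R -> R) : concave_on (fun z => z <= 0) g ->
  forall a c, a <= 0 -> c <= 0 -> g (a + c) + g 0 <= g a + g c.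
Proof.
  intros Hc a c Ha Hc0.
  destruct (Req_dec (a + c) 0) as [Hs|Hs].
  { assert (a = 0) by lra. assert (c = 0) by lra. subst. rewrite Rplus_0_r. lra. }
  set (l := a / (a + c)).
  assert (El : l * (a + c) = a) by (unfold l; field; auto).
  assert (Hl : 0 <= l <= 1) by (split; nra).
  pose proof (Hc (a + c) 0 l ltac:(simpl; lra) ltac:(simpl; lra) Hl) as H1.
  pose proof (Hc (a + c) 0 (1 - l) ltac:(simpl; lra) ltac:(simpl; lra) ltac:(lra)) as H2.
  replace (l * (a + c) + (1 - l) * 0) with a in H1 by lra.
  replace ((1 - l) * (a + c) + (1 - (1 - l)) * 0) with c in H2 by lra.
  lra.
Qed.

Theorem mainTheorem4 (q : nat) (hq : (2 <= q)%nat) :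
  concave_on (fun z => z <= 0) (G q) /\
  (forall eps x : R, 0 <= eps <= 1/2 -> 0 < x <= 1 ->
     F q ((1 - 2 * eps) * x) * F q 1 <= F q (1 - 2 * eps) * F q x).
Proof.
  destruct q as [|[|m]]; [lia|lia|].
  assert (Hconc : concave_on (fun z => z <= 0) (G (S (S m)))).
  { apply (concave_from_deriv _ (fun z => Hf m (exp z))).
    - intros z Hz. apply G_deriv; auto.
    - intros a b Hab. apply (Hf_mono m (Lmono_all m)).
      pose proof (exp_le1 a ltac:(lra)). pose proof (exp_le1 b ltac:(lra)).
      split; [lra|split; [|lra]].
      destruct (Req_dec a b) as [->|Hne]; [lra|]. left. apply exp_increasing. lra. }
  split; [exact Hconc|].
  intros eps x He Hx.
  change (F (S (S m))) with (fun y => ln (Pm m y)). cbv beta.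
  destruct (Req_dec eps (1/2)) as [->|Hne].
  { replace (1 - 2 * (1/2)) with 0 by field. rewrite Rmult_0_l, Pm_0, ln_1. lra. }
  set (e := 1 - 2 * eps).
  assert (He' : 0 < e <= 1) by (unfold e; lra).
  pose proof (conc_sum _ Hconc (ln x) (ln e)) as H.
  assert (ln x <= 0) by (rewrite <- ln_1; destruct (Req_dec x 1) as [->|]; [lra|left; apply ln_increasing; lra]).
  assert (ln e <= 0) by (rewrite <- ln_1; destruct (Req_dec e 1) as [->|]; [lra|left; apply ln_increasing; lra]).
  specialize (H ltac:(auto) ltac:(auto)).
  change (ln (ln (Pm m (exp (ln x + ln e)))) + ln (ln (Pm m (exp 0))) <=
    ln (ln (Pm m (exp (ln x)))) + ln (ln (Pm m (exp (ln e))))) in H.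
  rewrite exp_plus, !exp_ln, exp_0 in H by lra.
  rewrite (Rmult_comm x e) in H.
  assert (Hex : 0 < e * x <= 1) by (split; nra).
  pose proof (lnP_pos m _ Hex). pose proof (lnP_pos m 1 ltac:(lra)).
  pose proof (lnP_pos m x Hx). pose proof (lnP_pos m e He').
  rewrite <- (ln_mult (ln (Pm m (e * x)))), <- (ln_mult (ln (Pm m x))) in H by auto.
  destruct (Rle_or_lt (ln (Pm m (e * x)) * ln (Pm m 1)) (ln (Pm m e) * ln (Pm m x))) as [|Hlt]; auto.
  exfalso. apply ln_increasing in Hlt; [|apply Rmult_lt_0_compat; auto].
  rewrite (Rmult_comm (ln (Pm m e))) in Hlt. lra.
Qed.
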